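(* Consider the two-source resistive circuit described in the context with $E_1=E_2=E\neq0$, and with the cross link of resistance $R_3>0$ connected. Let $\mathrm{LCL}(R_1,R_2,R_3)=\mathrm{Loss}/\mathrm{Loss}'$, where $\mathrm{Loss}=i_1^2R_1+i_2^2R_2+i_3^2R_3$ and $\mathrm{Loss}'=(2E)^2/(R_1+R_2)$. Then the LCL increases monotonically as $|R_1-R_2|$ increases: namely, for fixed $R_3>0$ and fixed value $r>0$ of one of the two resistances $R_1,R_2$, if the other resistance equals $r+h$ (respectively $r-h$, with $h<r$), then LCL is a strictly increasing function of $h=|R_1-R_2|\ge 0$.
   Context: The circuit consists of two DC voltage sources $E_1,E_2$ and resistors $R_1,R_2>0$, arranged in a single loop so that, when the cross link is absent, the same current $i_1=i_2=(E_1+E_2)/(R_1+R_2)$ flows through $R_1$ and $R_2$ (and the total loss is $\mathrm{Loss}'=(E_1+E_2)^2/(R_1+R_2)$). When a cross link containing a resistor $R_3>0$ is connected, the currents through $R_1,R_2,R_3$ are $$i_1=\frac{E_1(R_2+R_3)+E_2R_3}{R_1R_2+R_1R_3+R_2R_3},\quad i_2=\frac{E_1R_3+E_2(R_1+R_3)}{R_1R_2+R_1R_3+R_2R_3},\quad i_3=\frac{-E_1R_2+E_2R_1}{R_1R_2+R_1R_3+R_2R_3}.$$ The Loss Cost of the Link (LCL) is the ratio of the total heat loss after adding the link to the total heat loss before adding it. *)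

(* Defs.v *)
From Stdlib Require Import Reals.
Open Scope R_scope.

Definition den (R1 R2 R3 : R) : R := R1 * R2 + R1 * R3 + R2 * R3.

Definition i1 (E1 E2 R1 R2 R3 : R) : R :=
  (E1 * (R2 + R3) + E2 * R3) / den R1 R2 R3.
Definition i2 (E1 E2 R1 R2 R3 : R) : R :=
  (E1 * R3 + E2 * (R1 + R3)) / den R1 R2 R3.
Definition i3 (E1 E2 R1 R2 R3 : R) : R :=
  (- E1 * R2 + E2 * R1) / den R1 R2 R3.

Definition Loss (E1 E2 R1 R2 R3 : R) : R :=
  (i1 E1 E2 R1 R2 R3) ^ 2 * R1 + (i2 E1 E2 R1 R2 R3) ^ 2 * R2
  + (i3 E1 E2 R1 R2 R3) ^ 2 * R3.

Definition Loss' (E1 E2 R1 R2 : R) : R := (E1 + E2) ^ 2 / (R1 + R2).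

Definition LCL (E1 E2 R1 R2 R3 : R) : R :=
  Loss E1 E2 R1 R2 R3 / Loss' E1 E2 R1 R2.

(* Main.v *)
Require Import Defs.
From Stdlib Require Import Reals.
From Stdlib Require Import Lra Psatz.
Open Scope R_scope.

Lemma LCL_closed (E a b c : R) : E <> 0 -> 0 < a -> 0 < b -> 0 < c ->
  LCL E E a b c = (a+b)*(a+b+4*c)/(4*(a*b+a*c+b*c)).
Proof.
  intros hE ha hb hc.
  unfold LCL, Loss, Loss', i1, i2, i3, den.
  assert (a*b+a*c+b*c <> 0) by nra.
  field; repeat split; try lra; try nra.
Qed.

Lemma diffeq (a b b' c : R) : 0 < a -> 0 < b -> 0 < b' -> 0 < c ->
  (a+b')*(a+b'+4*c)/(4*(a*b'+a*c+b'*c)) - (a+b)*(a+b+4*c)/(4*(a*b+a*c+b*c))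
  = (b'-b) * (a*(b*b' - a*a) + c*((a+b)*(a+b') - 4*a*a))
    / (4*(a*b+a*c+b*c)*(a*b'+a*c+b'*c)).
Proof.
  intros. field. split; nra.
Qed.

Lemma mono (a b b' c : R) : 0 < a -> 0 < b -> 0 < b' -> 0 < c ->
  ((a <= b /\ b < b') \/ (b' < b /\ b <= a)) ->
  (a+b)*(a+b+4*c)/(4*(a*b+a*c+b*c)) < (a+b')*(a+b'+4*c)/(4*(a*b'+a*c+b'*c)).
Proof.
  intros ha hb hb' hc H.
  apply Rminus_gt. rewrite diffeq by assumption.
  assert (hD : 0 < 4*(a*b+a*c+b*c)*(a*b'+a*c+b'*c)).
  { assert (0 < a*b+a*c+b*c) by nra. assert (0 < a*b'+a*c+b'*c) by nra. nra. }
  apply Rdiv_lt_0_compat; [|exact hD].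
  destruct H as [[h1 h2]|[h1 h2]].
  - assert (0 < b*b' - a*a) by nra.
    assert (0 < (a+b)*(a+b') - 4*a*a) by nra.
    assert (0 < a*(b*b' - a*a) + c*((a+b)*(a+b') - 4*a*a)) by nra. nra.
  - assert (b*b' - a*a < 0) by nra.
    assert ((a+b)*(a+b') - 4*a*a < 0) by nra.
    assert (a*(b*b' - a*a) + c*((a+b)*(a+b') - 4*a*a) < 0) by nra. nra.
Qed.

Theorem proposition2 (E R3 r : R) (hE : E <> 0) (hR3 : 0 < R3) (hr : 0 < r) :
  (* R1 = r fixed, R2 = r + h *)
  (forall h h' : R, 0 <= h -> h < h' ->
     LCL E E r (r + h) R3 < LCL E E r (r + h') R3) /\
  (* R1 = r fixed, R2 = r - h, h < r *)
  (forall h h' : R, 0 <= h -> h < h' -> h' < r ->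
     LCL E E r (r - h) R3 < LCL E E r (r - h') R3) /\
  (* R2 = r fixed, R1 = r + h *)
  (forall h h' : R, 0 <= h -> h < h' ->
     LCL E E (r + h) r R3 < LCL E E (r + h') r R3) /\
  (* R2 = r fixed, R1 = r - h, h < r *)
  (forall h h' : R, 0 <= h -> h < h' -> h' < r ->
     LCL E E (r - h) r R3 < LCL E E (r - h') r R3).
Proof.
  repeat split; intros h h' H1 H2; try intro H3;
    rewrite !LCL_closed by lra.
  - apply mono; lra.
  - apply mono; lra.
  - pose proof (mono r (r+h) (r+h') R3 ltac:(lra) ltac:(lra) ltac:(lra) hR3 ltac:(lra)).
    replace ((r + h + r) * (r + h + r + 4 * R3) / (4 * ((r + h) * r + (r + h) * R3 + r * R3)))
      with ((r + (r+h)) * (r + (r+h) + 4 * R3) / (4 * (r * (r+h) + r * R3 + (r+h) * R3))) by (f_equal; [ring| f_equal; ring]).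
    replace ((r + h' + r) * (r + h' + r + 4 * R3) / (4 * ((r + h') * r + (r + h') * R3 + r * R3)))
      with ((r + (r+h')) * (r + (r+h') + 4 * R3) / (4 * (r * (r+h') + r * R3 + (r+h') * R3))) by (f_equal; [ring| f_equal; ring]).
    exact H.
  - pose proof (mono r (r-h) (r-h') R3 ltac:(lra) ltac:(lra) ltac:(lra) hR3 ltac:(lra)).
    replace ((r - h + r) * (r - h + r + 4 * R3) / (4 * ((r - h) * r + (r - h) * R3 + r * R3)))
      with ((r + (r-h)) * (r + (r-h) + 4 * R3) / (4 * (r * (r-h) + r * R3 + (r-h) * R3))) by (f_equal; [ring| f_equal; ring]).
    replace ((r - h' + r) * (r - h' + r + 4 * R3) / (4 * ((r - h') * r + (r - h') * R3 + r * R3)))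
      with ((r + (r-h')) * (r + (r-h') + 4 * R3) / (4 * (r * (r-h') + r * R3 + (r-h') * R3))) by (f_equal; [ring| f_equal; ring]).
    exact H.
Qed.
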